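(* Under the standing assumptions below, let $\gamma>0$ and let $\{(y^t,z^t,x^t)\}$ be generated by the PR splitting iteration. Then for every $t\ge 1$, \[ \mathcal{P}_\gamma(y^t,z^t,x^t)\ge f(z^t)+g(z^t)+\frac12\left(\frac1\gamma-L\right)\|y^t-z^t\|^2 . \]
   Context: Standing assumptions: $f:\mathbb{R}^n\to\mathbb{R}$ is differentiable and strongly convex with modulus at least $\sigma>0$, and $\nabla f$ is Lipschitz continuous with modulus at most $L>0$. The function $g:\mathbb{R}^n\to(-\infty,\infty]$ is proper and lower semicontinuous, and for the $\gamma>0$ used, $\operatorname{Argmin}_u\{\gamma g(u)+\frac12\|u-w\|^2\}$ is nonempty for every $w\in\mathbb{R}^n$. PR splitting iteration: given $x^0$ and $\gamma>0$, for $t=0,1,2,\dots$: $y^{t+1}=\operatorname{argmin}_y\{f(y)+\frac{1}{2\gamma}\|y-x^t\|^2\}$; $z^{t+1}\in\operatorname{Argmin}_z\{g(z)+\frac{1}{2\gamma}\|2y^{t+1}-x^t-z\|^2\}$; $x^{t+1}=x^t+2(z^{t+1}-y^{t+1})$. Merit function: $\mathcal{P}_\gamma(y,z,x):=f(y)+g(z)-\frac{3}{2\gamma}\|y-z\|^2+\frac{1}{\gamma}\langle x-y,z-y\rangle$. *)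

(* Defs.v *)
From Stdlib Require Import Reals Lra.
From Stdlib Require Fin.
Open Scope R_scope.

Definition vec (n : nat) := Fin.t n -> R.

Fixpoint sumFin (n : nat) : (Fin.t n -> R) -> R :=
  match n with
  | O => fun _ => 0
  | S m => fun f => f Fin.F1 + sumFin m (fun i => f (Fin.FS i))
  end.

Definition vadd {n} (x y : vec n) : vec n := fun i => x i + y i.
Definition vsub {n} (x y : vec n) : vec n := fun i => x i - y i.
Definition vscale {n} (a : R) (x : vec n) : vec n := fun i => a * x i.
Definition inner {n} (x y : vec n) : R := sumFin n (fun i => x i * y i).
Definition norm2 {n} (x : vec n) : R := inner x x.
Definition norm {n} (x : vec n) : R := sqrt (norm2 x).

Definition has_gradient {n} (f : vec n -> R) (gf : vec n -> vec n) : Prop :=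
  forall x : vec n, forall eps, 0 < eps -> exists delta, 0 < delta /\
    forall h : vec n, norm h < delta ->
      Rabs (f (vadd x h) - f x - inner (gf x) h) <= eps * norm h.

Definition differentiable {n} (f : vec n -> R) : Prop :=
  exists gf, has_gradient f gf.

Definition strongly_convex {n} (f : vec n -> R) (sigma : R) : Prop :=
  forall (x y : vec n) (t : R), 0 <= t <= 1 ->
    f (vadd (vscale t x) (vscale (1 - t) y))
      <= t * f x + (1 - t) * f y - sigma / 2 * t * (1 - t) * norm2 (vsub x y).

Definition lipschitz {n} (G : vec n -> vec n) (L : R) : Prop :=
  forall x y : vec n, norm (vsub (G x) (G y)) <= L * norm (vsub x y).

(* Extended reals (-oo, +oo]: Some r = r, None = +oo *)
Definition ereal := option R.
Definition ele (a b : ereal) : Prop :=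
  match a, b with
  | _, None => True
  | None, Some _ => False
  | Some x, Some y => x <= y
  end.
Definition elt_r (a : R) (b : ereal) : Prop :=
  match b with None => True | Some y => a < y end.
Definition eaddr (r : R) (b : ereal) : ereal :=
  match b with None => None | Some y => Some (r + y) end.
Definition escale (c : R) (b : ereal) : ereal :=   (* used with c > 0 *)
  match b with None => None | Some y => Some (c * y) end.

Definition proper {n} (g : vec n -> ereal) : Prop := exists x, g x <> None.

Definition lsc {n} (g : vec n -> ereal) : Prop :=
  forall (x : vec n) (a : R), elt_r a (g x) ->
    exists delta, 0 < delta /\
      forall y : vec n, norm (vsub y x) < delta -> elt_r a (g y).

Definition is_argmin {n} (phi : vec n -> ereal) (u : vec n) : Prop :=
  forall v, ele (phi u) (phi v).

Definition merit {n} (f : vec n -> R) (g : vec n -> ereal) (gamma : R)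
  (y z x : vec n) : ereal :=
  eaddr (f y - 3 / (2 * gamma) * norm2 (vsub y z)
           + 1 / gamma * inner (vsub x y) (vsub z y)) (g z).

(* Main.v *)
Require Import Defs.
From Stdlib Require Import Reals Lra Psatz FunctionalExtensionality.
Open Scope R_scope.

Lemma sumFin_ext n (f g : Fin.t n -> R) : (forall i, f i = g i) -> sumFin n f = sumFin n g.
Proof. induction n; simpl; intros H; [reflexivity|]. rewrite H, (IHn _ (fun i => g (Fin.FS i))); auto. Qed.

Lemma sumFin_plus n (f g : Fin.t n -> R) : sumFin n (fun i => f i + g i) = sumFin n f + sumFin n g.
Proof. induction n; simpl; [ring|]. rewrite (IHn (fun i => f (Fin.FS i)) (fun i => g (Fin.FS i))). ring. Qed.

Lemma sumFin_mul n c (f : Fin.t n -> R) : sumFin n (fun i => c * f i) = c * sumFin n f.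
Proof. induction n; simpl; [ring|]. rewrite (IHn (fun i => f (Fin.FS i))). ring. Qed.

Lemma sumFin_nonneg n (f : Fin.t n -> R) : (forall i, 0 <= f i) -> 0 <= sumFin n f.
Proof. induction n; simpl; intros H; [lra|]. assert (0 <= sumFin n (fun i => f (Fin.FS i))) by (apply IHn; auto). specialize (H Fin.F1). lra. Qed.

Lemma norm2_nonneg n (x : vec n) : 0 <= norm2 x.
Proof. unfold norm2, inner. apply sumFin_nonneg. intros; nra. Qed.

Lemma norm2_expand n (w h : vec n) s :
  norm2 (vadd w (vscale s h)) = norm2 w + 2 * s * inner w h + s * s * norm2 h.
Proof.
  unfold norm2, inner. rewrite <- !sumFin_mul, <- !sumFin_plus.
  apply sumFin_ext; intro i; unfold vadd, vscale; ring.
Qed.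

Lemma inner_sq_le n (x y : vec n) : inner x y * inner x y <= norm2 x * norm2 y.
Proof.
  pose proof (norm2_nonneg n x). pose proof (norm2_nonneg n y).
  destruct (Req_dec (norm2 y) 0) as [E|E].
  - assert (inner x y = 0).
    { destruct (Req_dec (inner x y) 0); auto.
      pose proof (norm2_nonneg n (vadd x (vscale (-(norm2 x + 1)/(2*inner x y)) y))).
      rewrite norm2_expand, E in H2.
      replace (norm2 x + 2 * (- (norm2 x + 1) / (2 * inner x y)) * inner x y + - (norm2 x + 1) / (2 * inner x y) * (- (norm2 x + 1) / (2 * inner x y)) * 0) with (-1) in H2 by (field; auto). lra. }
    rewrite H1, E; lra.
  - pose proof (norm2_nonneg n (vadd x (vscale (-(inner x y)/norm2 y) y))).
    rewrite norm2_expand in H1.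
    assert (0 < norm2 y) by lra.
    assert (0 <= norm2 x - inner x y * inner x y / norm2 y).
    { replace (norm2 x - inner x y * inner x y / norm2 y) with
        (norm2 x + 2 * (- inner x y / norm2 y) * inner x y + - inner x y / norm2 y * (- inner x y / norm2 y) * norm2 y) by (field; lra). lra. }
    apply Rmult_le_compat_r with (r := norm2 y) in H3; [|lra].
    replace ((norm2 x - inner x y * inner x y / norm2 y) * norm2 y) with (norm2 x * norm2 y - inner x y * inner x y) in H3 by (field; lra). lra.
Qed.

Lemma cauchy_schwarz n (x y : vec n) : inner x y <= norm x * norm y.
Proof.
  unfold norm. rewrite <- sqrt_mult_alt by apply norm2_nonneg.
  apply Rle_trans with (Rabs (inner x y)); [apply Rle_abs|].
  rewrite <- sqrt_Rsqr_abs. apply sqrt_le_1_alt. unfold Rsqr. apply inner_sq_le.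
Qed.

Lemma norm_scale n s (h : vec n) : norm (vscale s h) = Rabs s * norm h.
Proof.
  unfold norm. assert (norm2 (vscale s h) = Rsqr s * norm2 h).
  { unfold norm2, inner, Rsqr. rewrite <- sumFin_mul. apply sumFin_ext; intro; unfold vscale; ring. }
  rewrite H, sqrt_mult_alt, sqrt_Rsqr_abs; auto. apply Rle_0_sqr.
Qed.

Lemma norm_nonneg n (x : vec n) : 0 <= norm x.
Proof. apply sqrt_pos. Qed.

Lemma deriv_line n (f : vec n -> R) gf (Hg : has_gradient f gf) (y h : vec n) s :
  derivable_pt_lim (fun s => f (vadd y (vscale s h))) s (inner (gf (vadd y (vscale s h))) h).
Proof.
  intros eps Heps. set (p := vadd y (vscale s h)).
  pose proof (norm_nonneg n h) as Hn.
  destruct (Hg p (eps / (2 * (norm h + 1)))) as [d0 [Hd0 Hd]].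
  { apply Rdiv_lt_0_compat; lra. }
  assert (Hd1 : 0 < d0 / (norm h + 1)) by (apply Rdiv_lt_0_compat; lra).
  exists (mkposreal _ Hd1). simpl. intros del Hdel Hlt.
  assert (Hnd : norm (vscale del h) < d0).
  { rewrite norm_scale. apply Rlt_le_trans with (d0 / (norm h + 1) * (norm h + 1)).
    - apply Rle_lt_trans with (Rabs del * (norm h + 1)); [pose proof (Rabs_pos del); nra|].
      apply Rmult_lt_compat_r; lra.
    - right; field; lra. }
  specialize (Hd _ Hnd).
  assert (E : vadd p (vscale del h) = vadd y (vscale (s + del) h)).
  { apply functional_extensionality; intro i; unfold p, vadd, vscale; ring. }
  assert (E2 : inner (gf p) (vscale del h) = del * inner (gf p) h).
  { unfold inner. rewrite <- sumFin_mul. apply sumFin_ext; intro; unfold vscale; ring. }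
  rewrite E, E2, norm_scale in Hd. fold p.
  replace ((f (vadd y (vscale (s + del) h)) - f p) / del - inner (gf p) h)
    with ((f (vadd y (vscale (s + del) h)) - f p - del * inner (gf p) h) / del) by (field; auto).
  unfold Rdiv at 1. rewrite Rabs_mult, Rabs_inv.
  assert (0 < Rabs del) by (apply Rabs_pos_lt; auto).
  apply Rle_lt_trans with (eps / (2 * (norm h + 1)) * (Rabs del * norm h) * / Rabs del).
  { apply Rmult_le_compat_r; auto. left; apply Rinv_0_lt_compat; auto. }
  replace (eps / (2 * (norm h + 1)) * (Rabs del * norm h) * / Rabs del) with (eps * (norm h / (2 * (norm h + 1)))) by (field; lra).
  assert (norm h / (2 * (norm h + 1)) < 1).
  { apply Rmult_lt_reg_r with (2 * (norm h + 1)); [lra|]. unfold Rdiv. rewrite Rmult_assoc, Rinv_l; lra. }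
  nra.
Qed.
Lemma poly_deriv A B C x : derivable_pt_lim (fun s => A + B*s + C*(s*s)) x (B + 2*C*x).
Proof.
  replace (B + 2*C*x) with (0 + (B * 1 + C * (1 * id x + id x * 1))) by (unfold id; ring).
  apply derivable_pt_lim_ext with (f := (fct_cte A + (mult_real_fct B id + mult_real_fct C (id * id)))%F).
  { intro s; unfold plus_fct, mult_real_fct, mult_fct, fct_cte, id; ring. }
  apply derivable_pt_lim_plus; [apply derivable_pt_lim_const|].
  apply derivable_pt_lim_plus; apply derivable_pt_lim_scal; [apply derivable_pt_lim_id|].
  apply derivable_pt_lim_mult; apply derivable_pt_lim_id.
Qed.

Lemma sum_deriv (F : R -> R) A B C x l : derivable_pt_lim F x l ->
  derivable_pt_lim (fun s => F s + (A + B*s + C*(s*s))) x (l + (B + 2*C*x)).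
Proof.
  intro H. apply derivable_pt_lim_ext with (f := plus_fct F (fun s => A + B*s + C*(s*s))).
  { intro; reflexivity. }
  apply derivable_pt_lim_plus; auto. apply poly_deriv.
Qed.

Lemma descent n (f : vec n -> R) gf L (Hg : has_gradient f gf) (Hlip : lipschitz gf L) (HL : 0 < L) (y z : vec n) :
  f z <= f y + inner (gf y) (vsub z y) + L / 2 * norm2 (vsub z y).
Proof.
  set (h := vsub z y). set (a := inner (gf y) h). set (N := norm2 h).
  set (F := fun s => f (vadd y (vscale s h))).
  destruct (MVT_cor2 (fun s => F s + (0 + (-a)*s + (-(L/2*N))*(s*s)))
     (fun s => inner (gf (vadd y (vscale s h))) h + (-a + 2*(-(L/2*N))*s)) 0 1 Rlt_0_1) as [c [Hc1 Hc2]].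
  { intros c _. apply sum_deriv. apply deriv_line; auto. }
  assert (E1 : F 1 = f z).
  { unfold F; f_equal; apply functional_extensionality; intro i; unfold h, vadd, vscale, vsub; ring. }
  assert (E0 : F 0 = f y).
  { unfold F; f_equal; apply functional_extensionality; intro i; unfold h, vadd, vscale, vsub; ring. }
  rewrite E1, E0 in Hc1.
  assert (Hd : inner (gf (vadd y (vscale c h))) h - a <= L * c * N).
  { assert (inner (gf (vadd y (vscale c h))) h - a = inner (vsub (gf (vadd y (vscale c h))) (gf y)) h).
    { unfold a, inner.
      replace (sumFin n (fun i => gf (vadd y (vscale c h)) i * h i) - sumFin n (fun i => gf y i * h i))
      with (sumFin n (fun i => gf (vadd y (vscale c h)) i * h i) + -1 * sumFin n (fun i => gf y i * h i)) by ring.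
      rewrite <- (sumFin_mul n (-1)), <- sumFin_plus. apply sumFin_ext; intro; unfold vsub; ring. }
    rewrite H. eapply Rle_trans; [apply cauchy_schwarz|].
    pose proof (Hlip (vadd y (vscale c h)) y).
    assert (vsub (vadd y (vscale c h)) y = vscale c h).
    { apply functional_extensionality; intro i; unfold vadd, vscale, vsub; ring. }
    rewrite H1, norm_scale, Rabs_right in H0 by lra.
    pose proof (norm_nonneg n h).
    pose proof (norm_nonneg n (vsub (gf (vadd y (vscale c h))) (gf y))).
    assert (norm h * norm h = N) by (unfold norm, N; apply sqrt_sqrt, norm2_nonneg).
    nra. }
  nra.
Qed.

Lemma optimality n (f : vec n -> R) gf gamma (Hg : has_gradient f gf) (Hgam : 0 < gamma) (y xs : vec n)
  (Hy : forall v, f y + 1 / (2 * gamma) * norm2 (vsub y xs) <= f v + 1 / (2 * gamma) * norm2 (vsub v xs))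
  (h : vec n) : inner (gf y) h + 1 / gamma * inner (vsub y xs) h = 0.
Proof.
  set (w := vsub y xs). set (cc := 1 / (2 * gamma)).
  set (G := fun s => f (vadd y (vscale s h)) + (cc * norm2 w + (cc * 2 * inner w h) * s + (cc * norm2 h) * (s*s))).
  assert (HD : derivable_pt_lim G 0 (inner (gf (vadd y (vscale 0 h))) h + (cc * 2 * inner w h + 2 * (cc * norm2 h) * 0))).
  { apply sum_deriv. apply deriv_line; auto. }
  assert (Ey : vadd y (vscale 0 h) = y).
  { apply functional_extensionality; intro i; unfold vadd, vscale; ring. }
  rewrite Ey in HD.
  pose (pr := exist (fun l => derivable_pt_lim G 0 l) _ HD : derivable_pt G 0).
  assert (Hm := deriv_minimum G (-1) 1 0 pr ltac:(lra) ltac:(lra)).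
  rewrite (derive_pt_eq_0 G 0 _ pr HD) in Hm.
  assert (Hmin : forall s, G 0 <= G s).
  { intro s. unfold G. rewrite Ey.
    assert (vadd w (vscale s h) = vsub (vadd y (vscale s h)) xs).
    { apply functional_extensionality; intro i; unfold w, vadd, vscale, vsub; ring. }
    pose proof (Hy (vadd y (vscale s h))) as Hs. rewrite <- H, norm2_expand in Hs. fold w cc in Hs.
    lra. }
  specialize (Hm (fun s _ _ => Hmin s)).
  unfold cc in Hm. replace (1 / (2 * gamma) * 2) with (1 / gamma) in Hm by (field; lra). lra.
Qed.


Theorem mainTheorem3 (n : nat) (f : vec n -> R) (gf : vec n -> vec n)
  (g : vec n -> ereal) (sigma L gamma : R)
  (Hsigma : 0 < sigma) (HL : 0 < L)
  (Hgrad : has_gradient f gf) (Hsc : strongly_convex f sigma)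
  (Hlip : lipschitz gf L)
  (Hproper : proper g) (Hlsc : lsc g)
  (Hgamma : 0 < gamma)
  (Hprox : forall w : vec n, exists u : vec n,
      is_argmin (fun u => eaddr (1 / 2 * norm2 (vsub u w)) (escale gamma (g u))) u)
  (x0 : vec n) (y z x : nat -> vec n)
  (Hx0 : x 0%nat = x0)
  (Hy : forall t : nat, forall v : vec n,
      f (y (S t)) + 1 / (2 * gamma) * norm2 (vsub (y (S t)) (x t))
        <= f v + 1 / (2 * gamma) * norm2 (vsub v (x t)))
  (Hz : forall t : nat,
      is_argmin (fun w => eaddr (1 / (2 * gamma) *
          norm2 (vsub (vsub (vscale 2 (y (S t))) (x t)) w)) (g w)) (z (S t)))
  (Hx : forall t : nat,
      x (S t) = vadd (x t) (vscale 2 (vsub (z (S t)) (y (S t))))) :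
  forall t : nat, (1 <= t)%nat ->
    ele (eaddr (f (z t) + 1 / 2 * (1 / gamma - L) * norm2 (vsub (y t) (z t))) (g (z t)))
        (merit f g gamma (y t) (z t) (x t)).
Proof.
  intros t Ht. destruct t as [|s]; [lia|].
  rewrite Hx. set (yy := y (S s)). set (zz := z (S s)). set (xs := x s).
  unfold merit. destruct (g zz) as [v|]; simpl; [|exact I].
  assert (Hopt := optimality n f gf gamma Hgrad Hgamma yy xs (Hy s) (vsub zz yy)).
  assert (Hdes := descent n f gf L Hgrad Hlip HL yy zz).
  assert (E1 : norm2 (vsub yy zz) = norm2 (vsub zz yy)).
  { unfold norm2, inner. apply sumFin_ext; intro; unfold vsub; ring. }
  assert (E2 : inner (vsub (vadd xs (vscale 2 (vsub zz yy))) yy) (vsub zz yy)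
     = - inner (vsub yy xs) (vsub zz yy) + 2 * norm2 (vsub zz yy)).
  { unfold norm2, inner.
    transitivity (sumFin n (fun i => -1 * (vsub yy xs i * vsub zz yy i) + 2 * (vsub zz yy i * vsub zz yy i))).
    - apply sumFin_ext; intro; unfold vsub, vadd, vscale; ring.
    - rewrite sumFin_plus, !sumFin_mul; ring. }
  rewrite E1, E2.
  set (N := norm2 (vsub zz yy)) in *. set (II := inner (vsub yy xs) (vsub zz yy)) in *.
  set (a := inner (gf yy) (vsub zz yy)) in *.
  assert (1 / gamma * II = - a) by lra.
  assert (3 / (2 * gamma) * N = 3 / 2 * (1/gamma) * N) by (field; lra).
  assert (1 / 2 * (1 / gamma - L) * N = 1/2 * (1/gamma) * N - L/2*N) by (field; lra).
  assert (1 / gamma * (- II + 2 * N) = - (1/gamma*II) + 2 * (1/gamma) * N) by (field; lra).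
  lra.
Qed.
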